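(* Let $p$ be an odd prime and $k\ge0$. Call a pair $(B,C)\in\mathbb{Z}_p^2$ admissible if $p^k\mid B$, $p^{k+1}\nmid B$ and $p^{k+1}\mid C$. (1) Let $A,A'\in\mathbb{Z}_p$, let $(B,C)$ and $(B',C')$ be admissible, and assume $p\nmid A^2-C^2$ and $p\nmid A'^2-C'^2$. If $f_{(A,B,C)}\equiv f_{(A',B',C')}\pmod{p^{2k+5}}$, then $A\equiv A'\pmod{p^{2k+3}}$. (2) Fix $A,A'\in\mathbb{Z}_p$ and an admissible pair $(B,C)$, with $p\nmid A^2-C^2$ and $A\equiv A'\pmod{p^{2k+3}}$. Then there is exactly one residue class $h\in(\mathbb{Z}/p^{2k+5}\mathbb{Z})[x]$ for which the following holds: there exists an admissible pair $(B',C')$ with $p^2(B'x+C')^2\equiv h\pmod{p^{2k+5}}$ and $f_{(A,B,C)}\equiv f_{(A',B',C')}\pmod{p^{2k+5}}$.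
   Context: For $A,B,C\in\mathbb{Z}_p$, define $f_{(A,B,C)}(x)=(x^2+pA)^2-p^2(Bx+C)^2\in\mathbb{Z}_p[x]$. Congruences of polynomials are coefficientwise. *)

(* Defs.v *)
From HB Require Import structures.
From mathcomp Require Import all_boot all_order all_algebra.
From mathcomp Require Import boolp classical_sets functions.
Set Implicit Arguments. Unset Strict Implicit. Unset Printing Implicit Defensive.
Import Order.TTheory GRing.Theory Num.Theory.
Local Open Scope ring_scope.

(* p-adic integers modelled as the inverse limit of Z/p^n Z:
   a sequence a : nat -> int with a (n+1) = a n (mod p^n).
   The residue of such an element modulo p^m is (a m mod p^m).
   Ring operations are pointwise. *)
Notation seqZ := (nat -> int).

Definition is_padic (p : nat) (a : seqZ) : Prop :=
  forall n : nat, (a n.+1 = a n %[mod (p ^ n)%:Z])%Z.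

Definition pcong (p m : nat) (a b : seqZ) : Prop :=
  ((p ^ m)%:Z %| a m - b m)%Z.

Definition pdvd (p m : nat) (a : seqZ) : Prop := pcong p m a 0.

Definition polycong (p m : nat) (f g : {poly seqZ}) : Prop :=
  forall i : nat, pcong p m f`_i g`_i.

(* congruence of a polynomial over Z_p with an integer polynomial
   representing a class in (Z/p^m Z)[x] *)
Definition polycong_int (p m : nat) (f : {poly seqZ}) (h : {poly int}) : Prop :=
  forall i : nat, ((p ^ m)%:Z %| (f`_i) m - h`_i)%Z.

Definition fABC (p : nat) (A B C : seqZ) : {poly seqZ} :=
  ('X ^+ 2 + (p%:R * A)%:P) ^+ 2 - ((p%:R : seqZ) ^+ 2)%:P * (B%:P * 'X + C%:P) ^+ 2.

Definition sqpart (p : nat) (B C : seqZ) : {poly seqZ} :=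
  ((p%:R : seqZ) ^+ 2)%:P * (B%:P * 'X + C%:P) ^+ 2.

Definition admissible (p k : nat) (B C : seqZ) : Prop :=
  pdvd p k B /\ ~ pdvd p k.+1 B /\ pdvd p k.+1 C.

(* Main.v *)
Require Import Defs.
From HB Require Import structures.
From mathcomp Require Import all_boot all_order all_algebra.
From mathcomp Require Import boolp classical_sets functions.
From mathcomp Require Import ring zify.
Set Implicit Arguments. Unset Strict Implicit. Unset Printing Implicit Defensive.
Import Order.TTheory GRing.Theory Num.Theory.
Local Open Scope ring_scope.

Lemma evD (f g : seqZ) m : (f + g) m = f m + g m. Proof. by []. Qed.
Lemma evB (f g : seqZ) m : (f - g) m = f m - g m. Proof. by []. Qed.
Lemma evN (f : seqZ) m : (- f) m = - f m. Proof. by []. Qed.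
Lemma evM (f g : seqZ) m : (f * g) m = f m * g m. Proof. by []. Qed.
Lemma ev0 m : (0 : seqZ) m = 0. Proof. by []. Qed.
Lemma ev1 m : (1 : seqZ) m = 1. Proof. by []. Qed.
Lemma evX (f : seqZ) n m : (f ^+ n) m = f m ^+ n.
Proof. by elim: n => [|n IH]; rewrite ?expr0 // !exprS evM IH. Qed.
Lemma evn n m : ((n%:R : seqZ) m) = n%:Z.
Proof. by elim: n => [|n IH]; rewrite // -addn1 natrD evD IH. Qed.
Definition evE := (evD, evB, evN, evM, evX, evn, ev0, ev1).

Lemma fABC_eq (p : nat) (A B C : seqZ) : fABC p A B C = 'X^4 + ((2%:R * p%:R * A) - p%:R^+2 * B^+2)%:P * 'X^2 + (- (2%:R * p%:R^+2 * B * C))%:P * 'X + (p%:R^+2 * (A^+2 - C^+2))%:P.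
Proof. rewrite /fABC. rewrite !polyCD !polyCM !polyCN !polyCB ?polyCX. ring. Qed.

Definition fc (p : nat) (a b c : int) (i : nat) : int :=
  match i with
  | 0 => p%:Z ^+ 2 * (a ^+ 2 - c ^+ 2)
  | 1 => - (2 * p%:Z ^+ 2 * b * c)
  | 2 => 2 * p%:Z * a - p%:Z ^+ 2 * b ^+ 2
  | 4 => 1
  | _ => 0
  end.

Lemma fcoef p A B C i m : (fABC p A B C)`_i m = fc p (A m) (B m) (C m) i.
Proof.
rewrite fABC_eq !coefD coefXn !coefCM coefXn coefX coefC.
case: i => [|[|[|[|[|i]]]]] /=; rewrite ?mulr0 ?mulr1 ?addr0 ?add0r !evE //.
Qed.
Section Core.
Variables (p : nat) (hp : prime p) (hodd : odd p).
Local Notation P := (p%:Z).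

Lemma P_neq0 : P != 0.
Proof. by rewrite eqz_nat; case: p hp. Qed.

Lemma PX_neq0 n : P ^+ n != 0.
Proof. by rewrite expf_neq0 // P_neq0. Qed.

Lemma cancelP m n x : (P ^+ (m + n) %| P ^+ m * x)%Z -> (P ^+ n %| x)%Z.
Proof. by rewrite exprD dvdz_mul2l // PX_neq0. Qed.

Lemma euclidP x y : (P %| x * y)%Z -> (P %| x)%Z \/ (P %| y)%Z.
Proof. by rewrite !dvdzE abszM Euclid_dvdM //; case/orP; auto. Qed.

Lemma cop2 n : coprimez (P ^+ n) 2.
Proof.
rewrite coprimezE abszX /= coprime_sym.
by rewrite coprimeXr // coprime2n.
Qed.

Lemma cancel2 n x : (P ^+ n %| 2 * x)%Z -> (P ^+ n %| x)%Z.
Proof. by rewrite Gauss_dvdzr // cop2. Qed.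

Lemma dvdPX n x : (0 < n)%N -> (P ^+ n %| x)%Z -> (P %| x)%Z.
Proof.
move=> n0 h; apply: dvdz_trans h.
by have := dvdz_exp2l P n0; rewrite expr1.
Qed.

Lemma PdvdPX n : (0 < n)%N -> (P %| P ^+ n)%Z.
Proof. by move=> n0; apply: (dvdPX n0); apply: dvdzz. Qed.

Lemma dvd_mulP n x : (P ^+ n %| x * P ^+ n)%Z.
Proof. by apply: dvdz_mull; apply: dvdzz. Qed.


Lemma PXk2 k j : P ^+ (2 * k + j) = P ^+ k * P ^+ k * P ^+ j.
Proof. by rewrite exprD mul2n -addnn exprD. Qed.

Lemma core1 k a b c a' b' c' :
  (P ^+ k %| b)%Z -> ~~ (P ^+ k.+1 %| b)%Z -> (P ^+ k.+1 %| c)%Z ->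
  (P ^+ k %| b')%Z -> ~~ (P ^+ k.+1 %| b')%Z -> (P ^+ k.+1 %| c')%Z ->
  ~~ (P %| a ^+ 2 - c ^+ 2)%Z ->
  (P ^+ (2 * k + 5) %| 2 * P * (a - a') - P ^+ 2 * (b ^+ 2 - b' ^+ 2))%Z ->
  (P ^+ (2 * k + 5) %| 2 * P ^+ 2 * (b * c - b' * c'))%Z ->
  (P ^+ (2 * k + 5) %| P ^+ 2 * ((a ^+ 2 - c ^+ 2) - (a' ^+ 2 - c' ^+ 2)))%Z ->
  (P ^+ (2 * k + 3) %| a - a')%Z.
Proof.
move=> hb hnb hc hb' hnb' hc' ha H2 H1 H0.
have [be eb] := dvdzP hb; have [be' eb'] := dvdzP hb'.
have [ga ec] := dvdzP hc; have [ga' ec'] := dvdzP hc'.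
rewrite exprSr in ec ec'.
rewrite !PXk2 in H2 H1 H0 *.
set K := P ^+ k in eb eb' ec ec' H2 H1 H0 *.
have KK0 : K * K != 0 by rewrite mulf_neq0 // PX_neq0.
have nbe : ~~ (P %| be)%Z.
  apply: contra hnb => h; rewrite eb exprSr mulrC; exact: dvdz_mul (dvdzz _) h.
have Pc : (P %| c)%Z by rewrite ec; apply/dvdz_mull/dvdz_mull/dvdzz.
have na : ~~ (P %| a)%Z.
  apply: contra ha => h; apply: rpredB; rewrite expr2; exact: dvdz_mulr.
set de := be ^+ 2 - be' ^+ 2.
have E2 : (K * K * P ^+ 4 %| 2 * (a - a') - K * K * P * de)%Z.
  move: H2; rewrite (_ : K * K * P ^+ 5 = P * (K * K * P ^+ 4)); last by ring.
  rewrite (_ : _ - _ = P * (2 * (a - a') - K * K * P * de)).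
    by rewrite dvdz_mul2l // P_neq0.
  by rewrite eb eb' /de; ring.
have [u eu] := dvdzP E2.
have e2 : 2 * (a - a') = K * K * P * (de + u * P ^+ 3).
  by rewrite -[2 * (a - a')](subrK (K * K * P * de)) eu; ring.
have Paa : (P %| a - a')%Z.
  apply: (@cancel2 1); rewrite expr1 e2 mulrC; exact/dvdz_mull/dvdz_mull/dvdzz.
have na' : ~~ (P %| a + a')%Z.
  apply: contra na => h; apply: (@cancel2 1); rewrite expr1.
  by rewrite (_ : 2 * a = (a + a') + (a - a')); [apply: rpredD | ring].
have X0 : (P ^+ 2 %| (de + u * P ^+ 3) * (a + a') - 2 * P * (ga ^+ 2 - ga' ^+ 2))%Z.
  have : (K * K * P ^+ 5 %| 2 * (P ^+ 2 * (a ^+ 2 - c ^+ 2 - (a' ^+ 2 - c' ^+ 2))))%Z.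
    exact: dvdz_mull.
  rewrite (_ : K * K * P ^+ 5 = (K * K * P ^+ 3) * P ^+ 2); last by ring.
  rewrite (_ : 2 * _ = (K * K * P ^+ 3) * ((de + u * P ^+ 3) * (a + a') - 2 * P * (ga ^+ 2 - ga' ^+ 2))).
    by rewrite dvdz_mul2l // (mulf_neq0 KK0 (PX_neq0 3)).
  rewrite (_ : 2 * (P ^+ 2 * (a ^+ 2 - c ^+ 2 - (a' ^+ 2 - c' ^+ 2))) = P ^+ 2 * (2 * (a - a') * (a + a') - 2 * (c ^+ 2 - c' ^+ 2))); last by ring.
  by rewrite e2 ec ec'; ring.
have Pde : (P %| de)%Z.
  have : (P %| de * (a + a'))%Z.
    have := dvdPX (isT : (0 < 2)%N) X0.
    rewrite (_ : _ - _ = de * (a + a') + P * (u * P ^+ 2 * (a + a') - 2 * (ga ^+ 2 - ga' ^+ 2))); last by ring.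
    by rewrite rpredDr //; apply/dvdz_mulr/dvdzz.
  by case/euclidP => // h; rewrite h in na'.
have Pbg : (P %| be * ga - be' * ga')%Z.
  have : (P ^+ 2 %| 2 * (be * ga - be' * ga'))%Z.
    move: H1; rewrite (_ : K * K * P ^+ 5 = (K * K * P ^+ 3) * P ^+ 2); last by ring.
    rewrite (_ : 2 * _ * _ = (K * K * P ^+ 3) * (2 * (be * ga - be' * ga'))).
      by rewrite dvdz_mul2l // (mulf_neq0 KK0 (PX_neq0 3)).
    by rewrite eb eb' ec ec'; ring.
  by move/cancel2; apply: dvdPX.
have Pgg : (P %| ga ^+ 2 - ga' ^+ 2)%Z.
  rewrite (_ : ga ^+ 2 - ga' ^+ 2 = (ga - ga') * (ga + ga')); last by ring.
  have : (P %| (be - be') * (be + be'))%Z by rewrite (_ : _ * _ = de) //; rewrite /de; ring.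
  case/euclidP => h.
  - have : (P %| be * (ga - ga'))%Z.
      rewrite (_ : be * (ga - ga') = (be * ga - be' * ga') - (be - be') * ga'); last by ring.
      by apply: rpredB => //; apply: dvdz_mulr.
    case/euclidP => h2; first by rewrite h2 in nbe.
    exact: dvdz_mulr.
  - have : (P %| be * (ga + ga'))%Z.
      rewrite (_ : be * (ga + ga') = (be * ga - be' * ga') + (be + be') * ga'); last by ring.
      by apply: rpredD => //; apply: dvdz_mulr.
    case/euclidP => h2; first by rewrite h2 in nbe.
    exact: dvdz_mull.
have [d1 ed1] := dvdzP Pde.
have Pd1 : (P %| d1)%Z.
  have : (P %| d1 * (a + a'))%Z.
    have : (P * P %| P * (d1 * (a + a') + P * (u * P * (a + a')) - 2 * (ga ^+ 2 - ga' ^+ 2)))%Z.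
      by rewrite -expr2 (_ : P * _ = (de + u * P ^+ 3) * (a + a') - 2 * P * (ga ^+ 2 - ga' ^+ 2)) // ed1; ring.
    rewrite dvdz_mul2l ?P_neq0 // => h.
    have h2 : (P %| d1 * (a + a') + P * (u * P * (a + a')))%Z.
      by rewrite -(subrK (2 * (ga ^+ 2 - ga' ^+ 2)) (_ + _)); apply: rpredD => //; apply: dvdz_mull.
    by move: h2; rewrite rpredDr //; apply/dvdz_mulr/dvdzz.
  by case/euclidP => // h; rewrite h in na'.
have [d2 ed2] := dvdzP Pd1.
rewrite /K -PXk2; apply: cancel2; rewrite PXk2 -/K e2 ed1 ed2.
rewrite (_ : _ * _ = (d2 + u * P) * (K * K * P ^+ 3)); last by ring.
exact/dvdz_mull/dvdzz.
Qed.

Lemma core2 k a b c a' :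
  (P ^+ k %| b)%Z -> ~~ (P ^+ k.+1 %| b)%Z -> (P ^+ k.+1 %| c)%Z ->
  (P ^+ (2 * k + 3) %| a - a')%Z ->
  exists s,
  (P ^+ (2 * k + 5) %| 2 * P * (a - a') - P ^+ 2 * (b ^+ 2 - (b + s * P ^+ (k + 2)) ^+ 2))%Z /\ (P ^+ (2 * k + 5) %| 2 * P ^+ 2 * (b * c - (b + s * P ^+ (k + 2)) * c))%Z /\ (P ^+ (2 * k + 5) %| P ^+ 2 * ((a ^+ 2 - c ^+ 2) - (a' ^+ 2 - c ^+ 2)))%Z.
Proof.
move=> hb hnb hc ha.
have [be eb] := dvdzP hb; have [ga ec] := dvdzP hc; have [t et] := dvdzP ha.
rewrite exprSr in ec; rewrite !PXk2 in et *; rewrite exprD.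
set K := P ^+ k in eb ec et *.
have nbe : ~~ (P %| be)%Z.
  apply: contra hnb => h; rewrite eb exprSr mulrC; exact: dvdz_mul (dvdzz _) h.
have cop : coprimez be P.
  by rewrite coprimezE coprime_sym prime_coprime // -dvdzE.
have [[u v] /= huv] := coprimezP _ _ cop.
exists (- t * u); split; [|split].
- rewrite (_ : 2 * P * (a - a') - P ^+ 2 * (b ^+ 2 - (b + - t * u * (K * P ^+ 2)) ^+ 2) = K * K * P ^+ 4 * (2 * t * (1 - u * be) + (t * u) ^+ 2 * P ^+ 2)); last first.
    by rewrite et eb; ring.
  rewrite (_ : 1 - u * be = v * P); last by rewrite -huv; ring.
  rewrite (_ : K * K * P ^+ 4 * (2 * t * (v * P) + (t * u) ^+ 2 * P ^+ 2) = (2 * t * v + (t * u) ^+ 2 * P) * (K * K * P ^+ 5)); last by ring.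
  exact/dvdz_mull/dvdzz.
- rewrite (_ : 2 * P ^+ 2 * (b * c - (b + - t * u * (K * P ^+ 2)) * c) = (2 * ga * t * u) * (K * K * P ^+ 5)); last by rewrite eb ec; ring.
  exact/dvdz_mull/dvdzz.
- rewrite (_ : P ^+ 2 * ((a ^+ 2 - c ^+ 2) - (a' ^+ 2 - c ^+ 2)) = (t * (a + a')) * (K * K * P ^+ 5)); last first.
    by rewrite -[a](subrK a') et; ring.
  exact/dvdz_mull/dvdzz.
Qed.
End Core.

Lemma PX (p m : nat) : (p ^ m)%:Z = p%:Z ^+ m.
Proof. by rewrite -natz natrX natz. Qed.

Lemma padic_tr p (x : seqZ) m n : is_padic p x -> (m <= n)%N ->
  ((p%:Z ^+ m) %| x n - x m)%Z.
Proof.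
move=> hx; elim: n => [|n IH]; first by rewrite leqn0 => /eqP ->; rewrite subrr dvdz0.
rewrite leq_eqVlt => /orP [/eqP -> | hlt]; first by rewrite subrr dvdz0.
rewrite (_ : x n.+1 - x m = (x n.+1 - x n) + (x n - x m)); last by ring.
apply: rpredD; last exact: IH.
have := hx n; move/eqP; rewrite eqz_mod_dvd PX; apply: dvdz_trans.
by apply: dvdz_exp2l.
Qed.

Lemma tr_dvd p (x : seqZ) m n : is_padic p x -> (m <= n)%N ->
  ((p%:Z ^+ m) %| x m)%Z = ((p%:Z ^+ m) %| x n)%Z.
Proof.
move=> hx hmn; have h := padic_tr hx hmn.
by rewrite -[x n](subrK (x m)) rpredDl.
Qed.

Lemma le_kN k : (k <= 2 * k + 5)%N. Proof. lia. Qed.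
Lemma le_k1N k : (k.+1 <= 2 * k + 5)%N. Proof. lia. Qed.
Lemma le_k3N k : (2 * k + 3 <= 2 * k + 5)%N. Proof. lia. Qed.
Lemma le_oN k : (1 <= 2 * k + 5)%N. Proof. lia. Qed.

Lemma part1 p k (hp : prime p) (hodd : odd p) (A B C A' B' C' : seqZ) :
     is_padic p A -> is_padic p B -> is_padic p C ->
     is_padic p A' -> is_padic p B' -> is_padic p C' ->
     admissible p k B C -> admissible p k B' C' ->
     ~ pdvd p 1 (A ^+ 2 - C ^+ 2) -> ~ pdvd p 1 (A' ^+ 2 - C' ^+ 2) ->
     polycong p (2 * k + 5) (fABC p A B C) (fABC p A' B' C') ->
     pcong p (2 * k + 3) A A'.
Proof.
move=> hA hB hC hA' hB' hC' [hb [hnb hc]] [hb' [hnb' hc']] ha ha' hf.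
rewrite /pdvd /pcong PX !evE subr0 in hb.
rewrite /pdvd /pcong PX !evE subr0 in hnb.
rewrite /pdvd /pcong PX !evE subr0 in hc.
rewrite /pdvd /pcong PX !evE subr0 in hb'.
rewrite /pdvd /pcong PX !evE subr0 in hnb'.
rewrite /pdvd /pcong PX !evE subr0 in hc'.
rewrite /pdvd /pcong PX !evE subr0 in ha.
rewrite /pdvd /pcong PX !evE subr0 in ha'.
rewrite /pcong PX.
have kN := le_kN k.
have k1N := le_k1N k.
have k3N := le_k3N k.
have oN := le_oN k.
rewrite (tr_dvd hB kN) in hb; rewrite (tr_dvd hB' kN) in hb'.
rewrite (tr_dvd hB k1N) in hnb; rewrite (tr_dvd hB' k1N) in hnb'.
rewrite (tr_dvd hC k1N) in hc; rewrite (tr_dvd hC' k1N) in hc'.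
have haN : ~~ (p%:Z %| A (2 * k + 5)%N ^+ 2 - C (2 * k + 5)%N ^+ 2)%Z.
  apply/negP => h; apply: ha; rewrite expr1.
  rewrite (_ : A 1%N ^+ 2 - C 1%N ^+ 2 = (A (2 * k + 5)%N ^+ 2 - C (2 * k + 5)%N ^+ 2) -
     ((A (2 * k + 5)%N - A 1%N) * (A (2 * k + 5)%N + A 1%N) - (C (2 * k + 5)%N - C 1%N) * (C (2 * k + 5)%N + C 1%N))); last by ring.
  apply: rpredB => //; apply: rpredB; apply: dvdz_mulr.
    by have := padic_tr hA oN; rewrite expr1.
  by have := padic_tr hC oN; rewrite expr1.
have h0 := hf 0%N; have h1 := hf 1%N; have h2 := hf 2%N.
rewrite /pcong !fcoef /= PX in h0 h1 h2.
have key : (p%:Z ^+ (2 * k + 3) %| A (2 * k + 5)%N - A' (2 * k + 5)%N)%Z.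
  apply: (core1 hp hodd hb (introT negP hnb) hc hb' (introT negP hnb') hc' haN).
  - by move: h2; rewrite (_ : _ - _ = 2 * p%:Z * (A (2 * k + 5)%N - A' (2 * k + 5)%N) - p%:Z ^+ 2 * (B (2 * k + 5)%N ^+ 2 - B' (2 * k + 5)%N ^+ 2)) //; ring.
  - by move: h1; rewrite (_ : _ - _ = - (2 * p%:Z ^+ 2 * (B (2 * k + 5)%N * C (2 * k + 5)%N - B' (2 * k + 5)%N * C' (2 * k + 5)%N))) ?rpredN //; ring.
  - by move: h0; rewrite (_ : _ - _ = p%:Z ^+ 2 * ((A (2 * k + 5)%N ^+ 2 - C (2 * k + 5)%N ^+ 2) - (A' (2 * k + 5)%N ^+ 2 - C' (2 * k + 5)%N ^+ 2))) //; ring.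
rewrite (_ : A (2 * k + 3)%N - A' (2 * k + 3)%N = (A (2 * k + 5)%N - A' (2 * k + 5)%N) - (A (2 * k + 5)%N - A (2 * k + 3)%N) + (A' (2 * k + 5)%N - A' (2 * k + 3)%N)); last by ring.
by apply: rpredD; [apply: rpredB => //; apply: padic_tr | apply: padic_tr].
Qed.

Lemma sqpartE p (A B C : seqZ) :
  sqpart p B C = ('X ^+ 2 + (p%:R * A)%:P) ^+ 2 - fABC p A B C.
Proof. rewrite /fABC /sqpart; ring. Qed.

Lemma sq_coef p (A B C : seqZ) i m :
  (sqpart p B C)`_i m = (('X ^+ 2 + (p%:R * A)%:P) ^+ 2)`_i m - (fABC p A B C)`_i m.
Proof. by rewrite {1}(sqpartE p A) coefB evB. Qed.

Lemma part2 p k (hp : prime p) (hodd : odd p) (A B C A' : seqZ) :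
     is_padic p A -> is_padic p B -> is_padic p C -> is_padic p A' ->
     admissible p k B C ->
     ~ pdvd p 1 (A ^+ 2 - C ^+ 2) ->
     pcong p (2 * k + 3) A A' ->
     let good (h : {poly int}) :=
       exists B' C' : seqZ, is_padic p B' /\ is_padic p C' /\
         admissible p k B' C' /\
         polycong_int p (2 * k + 5) (sqpart p B' C') h /\
         polycong p (2 * k + 5) (fABC p A B C) (fABC p A' B' C') in
     exists h : {poly int}, good h /\
       forall h' : {poly int}, good h' ->
         forall i : nat, (h'`_i = h`_i %[mod (p ^ (2 * k + 5))%:Z])%Z.
Proof.
move=> hA hB hC hA' [hb [hnb hc]] ha hAA' good.
rewrite /pdvd /pcong PX !evE subr0 in hb.
rewrite /pdvd /pcong PX !evE subr0 in hnb.
rewrite /pdvd /pcong PX !evE subr0 in hc.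
rewrite /pcong PX in hAA'.
have kN := le_kN k.
have k1N := le_k1N k.
have k3N := le_k3N k.
rewrite (tr_dvd hB kN) in hb; rewrite (tr_dvd hB k1N) in hnb.
rewrite (tr_dvd hC k1N) in hc.
set N := (2 * k + 5)%N in hb hnb hc.
have hAN : (p%:Z ^+ (2 * k + 3) %| A N - A' N)%Z.
  rewrite (_ : A N - A' N = (A (2 * k + 3)%N - A' (2 * k + 3)%N) + (A N - A (2 * k + 3)%N) - (A' N - A' (2 * k + 3)%N)); last by ring.
  by apply: rpredB; [apply: rpredD => //; apply: padic_tr | apply: padic_tr].
have [s [e2 [e1 e0]]] := core2 hp hb (introT negP hnb) hc hAN.
pose B' : seqZ := fun _ => B N + s * p%:Z ^+ (k + 2).
pose C' : seqZ := fun _ => C N.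
pose h := map_poly (fun x : seqZ => x N) (sqpart p B' C').
have hadm : admissible p k B' C'.
  rewrite /admissible /pdvd /pcong !PX !evE !subr0 /B' /C'; split; [|split].
  - by apply: rpredD => //; rewrite exprD; apply: dvdz_mull; apply: dvdz_mulr; apply: dvdzz.
  - move=> h1; apply: hnb.
    rewrite -(addrK (s * p%:Z ^+ (k + 2)) (B N)); apply: rpredB => //.
    by rewrite addn2 exprS; apply: dvdz_mull; rewrite exprS; apply: dvdz_mull; apply: dvdzz.
  - by [].
have hsq0 : polycong_int p N (sqpart p B' C') h.
  by move=> i; rewrite /h coef_map_id0 // subrr dvdz0.
have hf0 : polycong p N (fABC p A B C) (fABC p A' B' C').
  move=> i; rewrite /pcong !fcoef PX /B' /C'.
  case: i => [|[|[|i]]] /=.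
  - by move: e0; rewrite (_ : p%:Z ^+ 2 * (A N ^+ 2 - C N ^+ 2) - p%:Z ^+ 2 * (A' N ^+ 2 - C N ^+ 2) = p%:Z ^+ 2 * ((A N ^+ 2 - C N ^+ 2) - (A' N ^+ 2 - C N ^+ 2))) //; ring.
  - by move: e1; rewrite (_ : - (2 * p%:Z ^+ 2 * B N * C N) - - (2 * p%:Z ^+ 2 * (B N + s * p%:Z ^+ (k + 2)) * C N) = - (2 * p%:Z ^+ 2 * (B N * C N - (B N + s * p%:Z ^+ (k + 2)) * C N))) ?rpredN //; ring.
  - by move: e2; rewrite (_ : 2 * p%:Z * A N - p%:Z ^+ 2 * B N ^+ 2 - (2 * p%:Z * A' N - p%:Z ^+ 2 * (B N + s * p%:Z ^+ (k + 2)) ^+ 2) = 2 * p%:Z * (A N - A' N) - p%:Z ^+ 2 * (B N ^+ 2 - (B N + s * p%:Z ^+ (k + 2)) ^+ 2)) //; ring.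
  - by case: i => [|[|i]] /=; rewrite subrr dvdz0.
have goodh : good h.
  by exists B', C'; do !split => //.
exists h; split => // h' [B'' [C'' [_ [_ [_ [hsq hf]]]]]] i.
apply/eqP; rewrite eqz_mod_dvd.
have d1 := hsq i; have d2 := hsq0 i; have d3 := hf i; have d4 := hf0 i.
rewrite /pcong -/N in d3 d4.
rewrite /polycong_int -/N in d1 d2.
have s1 := sq_coef p A' B' C' i N.
have s2 := sq_coef p A' B'' C'' i N.
rewrite (_ : h'`_i - h`_i = ((sqpart p B' C')`_i N - h`_i) - ((sqpart p B'' C'')`_i N - h'`_i)
   + ((fABC p A B C)`_i N - (fABC p A' B'' C'')`_i N) - ((fABC p A B C)`_i N - (fABC p A' B' C')`_i N)); last by rewrite s1 s2; ring.
by apply: rpredB => //; apply: rpredD => //; apply: rpredB.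
Qed.

Unset Implicit Arguments.

Theorem claim6 (p k : nat) (hp : prime p) (hodd : odd p) :
  (forall A B C A' B' C' : seqZ,
     is_padic p A -> is_padic p B -> is_padic p C ->
     is_padic p A' -> is_padic p B' -> is_padic p C' ->
     admissible p k B C -> admissible p k B' C' ->
     ~ pdvd p 1 (A ^+ 2 - C ^+ 2) -> ~ pdvd p 1 (A' ^+ 2 - C' ^+ 2) ->
     polycong p (2 * k + 5) (fABC p A B C) (fABC p A' B' C') ->
     pcong p (2 * k + 3) A A') /\
  (forall A B C A' : seqZ,
     is_padic p A -> is_padic p B -> is_padic p C -> is_padic p A' ->
     admissible p k B C ->
     ~ pdvd p 1 (A ^+ 2 - C ^+ 2) ->
     pcong p (2 * k + 3) A A' ->
     let good (h : {poly int}) :=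
       exists B' C' : seqZ, is_padic p B' /\ is_padic p C' /\
         admissible p k B' C' /\
         polycong_int p (2 * k + 5) (sqpart p B' C') h /\
         polycong p (2 * k + 5) (fABC p A B C) (fABC p A' B' C') in
     exists h : {poly int}, good h /\
       forall h' : {poly int}, good h' ->
         forall i : nat, (h'`_i = h`_i %[mod (p ^ (2 * k + 5))%:Z])%Z).
Proof.
split; [exact: part1 | exact: part2].
Qed.
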